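(* For the redundancy-$d$ cancel-on-completion model described in the context, provided the normalising sum is finite, the stationary distribution of the token state descriptor is $$\pi((T_1,n_1,\dots,T_i,n_i))=\pi((0))\frac1{i!}\prod_{j=1}^i\Big(\frac{j\lambda}{\mu\binom Kd F_j(T_1,\dots,T_j)}\Big)^{n_j+1},$$ for all $i\in\{0,\dots,\binom Kd\}$, distinct $T_1,\dots,T_i$ and $n_j\in\mathbb N_0$.
   Context: Redundancy-$d$ COC model: $K$ homogeneous servers, each with its own FCFS queue, serving at exponential rate $\mu$. Customers arrive as a Poisson process with rate $\lambda$; each picks a uniformly random set of $d$ of the $K$ servers and sends a copy to each, copies having independent exponential($\mu$) service requirements; when any copy completes, all copies of that customer are removed. Customer types correspond to the $\binom Kd$ server subsets, each with arrival rate $\lambda/\binom Kd$. Token representation: one token per type, held by the oldest customer of that type present. State: $(0)$ or $(T_1,n_1,\dots,T_i,n_i)$ with $T_1,\dots,T_i$ distinct held tokens ordered by arrival of their holders and $n_j$ the number of non-holding customers arriving between holders of $T_j$ and $T_{j+1}$ (after the holder of $T_i$ for $j=i$). $F_j(T_1,\dots,T_j)$ denotes the number of servers in the union of the server sets of the types corresponding to $T_1,\dots,T_j$. *)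

(* Defs.v *)
From HB Require Import structures.
From mathcomp Require Import all_boot.
From Stdlib Require Import Reals.
Set Implicit Arguments. Unset Strict Implicit. Unset Printing Implicit Defensive.

Definition ctype (K d : nat) : finType := {S : {set 'I_K} | #|S| == d}.

Definition rsum {T : Type} (s : seq T) (f : T -> R) : R :=
  foldr (fun x acc => (f x + acc)%R) 0%R s.
Definition rprod {T : Type} (s : seq T) (f : T -> R) : R :=
  foldr (fun x acc => (f x * acc)%R) 1%R s.

Definition servers K d (s : seq (ctype K d)) : {set 'I_K} :=
  \bigcup_(c <- s) val c.

(* ---------- detailed (per-customer) COC chain ----------
   State: list of the types of the customers present, oldest first.
   A customer of type c preceded by the customers [pre] is served
   (FCFS at each server) by the servers of c not used by older
   customers, hence completes at rate mu * #|c \ servers pre|. *)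
Definition dep_rate K d (mu : R) (pre : seq (ctype K d)) (c : ctype K d) : R :=
  (mu * INR #|val c :\: servers pre|)%R.

Fixpoint dep_total_aux K d (mu : R) (pre x : seq (ctype K d)) : R :=
  match x with
  | [::] => 0%R
  | c :: x' => (dep_rate mu pre c + dep_total_aux mu (rcons pre c) x')%R
  end.

Definition out_rate K d (lam mu : R) (x : seq (ctype K d)) : R :=
  (lam + dep_total_aux mu [::] x)%R.

(* total inflow into state x under the measure p:
   an arrival of the last customer of x (rate lam / C(K,d) per type),
   or the completion of a customer of type c at position k. *)
Definition in_rate K d (lam mu : R) (p : seq (ctype K d) -> R)
    (x : seq (ctype K d)) : R :=
  ((match rev x with
    | [::] => 0
    | c :: ry => p (rev ry) * (lam / INR 'C(K, d))
    end)
   + rsum (iota 0 (size x).+1) (fun k =>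
       rsum (enum (ctype K d)) (fun c =>
         p (take k x ++ c :: drop k x) * dep_rate mu (take k x) c)))%R.

Definition mass K d (p : seq (ctype K d) -> R) (n : nat) : R :=
  rsum (enum ((n.-tuple (ctype K d)) : finType)) (fun t => p (val t)).

Definition stationary K d (lam mu : R) (p : seq (ctype K d) -> R) : Prop :=
  (forall x, (0 <= p x)%R) /\
  infinite_sum (mass p) 1%R /\
  (forall x, (p x * out_rate lam mu x)%R = in_rate lam mu p x).

(* ---------- token state descriptor ----------
   Token state (T_1,n_1,...,T_i,n_i) is the list [:: (T_1,n_1); ...];
   the empty list is the state (0). *)
Fixpoint incr_last (T : Type) (x : seq (T * nat)) : seq (T * nat) :=
  match x with
  | [::] => [::]
  | (c, n) :: x' =>
      match x' with
      | [::] => [:: (c, n.+1)]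
      | _ => (c, n) :: incr_last x'
      end
  end.

Definition desc_step K d (acc : seq (ctype K d * nat)) (c : ctype K d) :=
  if c \in map fst acc then incr_last acc else rcons acc (c, 0).

Definition desc K d (s : seq (ctype K d)) : seq (ctype K d * nat) :=
  foldl (@desc_step K d) [::] s.

Definition pi_tok K d (p : seq (ctype K d) -> R) (x : seq (ctype K d * nat)) : R :=
  let n := (size x + sumn (map snd x))%N in
  rsum (enum ((n.-tuple (ctype K d)) : finType))
    (fun t => if desc (val t) == x then p (val t) else 0%R).

Definition Fj K d (x : seq (ctype K d * nat)) (j : nat) : nat :=
  #|servers (take j (map fst x))|.

Definition tok_weight K d (lam mu : R) (x : seq (ctype K d * nat)) : R :=
  (/ INR (size x)`! *
   rprod (iota 1 (size x)) (fun j =>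
     (INR j * lam / (mu * INR 'C(K, d) * INR (Fj x j)))
       ^ (S (nth O (map snd x) (Nat.pred j))))%R).

Definition norm_finite K d (lam mu : R) : Prop :=
  exists M : R, forall l : seq (seq (ctype K d * nat)),
    uniq l -> all (fun x => uniq (map fst x)) l ->
    (rsum l (tok_weight lam mu) <= M)%R.

(* Main.v *)
Require Import Defs.
From HB Require Import structures.
From mathcomp Require Import all_boot.
From Stdlib Require Import Reals Lra Lia.
From mathcomp Require Import zify.

Set Implicit Arguments. Unset Strict Implicit. Unset Printing Implicit Defensive.
Delimit Scope nat_scope with N.

HB.instance Definition _ := Monoid.isComLaw.Build R 0%R Rplus
  (fun a b c => esym (Rplus_assoc a b c)) Rplus_comm Rplus_0_l.

Local Open Scope R_scope.

Lemma rsumE (T : Type) (s : seq T) f : rsum s f = \big[Rplus/0]_(x <- s) f x.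
Proof. elim: s => [|x s IH] /=; [by rewrite big_nil | by rewrite big_cons IH]. Qed.

Lemma rsum_nil (T : Type) (f : T -> R) : rsum [::] f = 0.
Proof. by []. Qed.
Lemma rsum_cons (T : Type) x (s : seq T) f : rsum (x :: s) f = f x + rsum s f.
Proof. by []. Qed.
Lemma rsum_cat (T : Type) (s1 s2 : seq T) f : rsum (s1 ++ s2) f = rsum s1 f + rsum s2 f.
Proof. by rewrite !rsumE big_cat. Qed.
Lemma rsum_map (T U : Type) (h : T -> U) (s : seq T) f : rsum (map h s) f = rsum s (fun x => f (h x)).
Proof. by rewrite !rsumE big_map. Qed.
Lemma rsum_perm (T : eqType) (s1 s2 : seq T) f : perm_eq s1 s2 -> rsum s1 f = rsum s2 f.
Proof. by move=> H; rewrite !rsumE; apply: perm_big. Qed.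
Lemma rsum_ext (T : Type) (s : seq T) f g : (forall x, f x = g x) -> rsum s f = rsum s g.
Proof. by move=> H; elim: s => //= x s ->; rewrite H. Qed.
Lemma rsum_ext_in (T : eqType) (s : seq T) f g : (forall x, x \in s -> f x = g x) -> rsum s f = rsum s g.
Proof.
elim: s => //= x s IH H; rewrite H ?mem_head // IH // => y Hy; apply: H.
by rewrite in_cons Hy orbT.
Qed.
Lemma rsum_add (T : Type) (s : seq T) f g : rsum s (fun x => f x + g x) = rsum s f + rsum s g.
Proof. elim: s => /= [|x s ->]; lra. Qed.
Lemma rsum_scale (T : Type) (s : seq T) f c : rsum s (fun x => c * f x) = c * rsum s f.
Proof. elim: s => /= [|x s ->]; lra. Qed.
Lemma rsum_scaler (T : Type) (s : seq T) f c : rsum s (fun x => f x * c) = rsum s f * c.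
Proof. elim: s => /= [|x s ->]; lra. Qed.
Lemma rsum_opp (T : Type) (s : seq T) f : rsum s (fun x => - f x) = - rsum s f.
Proof. elim: s => /= [|x s ->]; lra. Qed.
Lemma rsum_const0 (T : Type) (s : seq T) : rsum s (fun _ => 0) = 0.
Proof. elim: s => //= x s ->; lra. Qed.
Lemma rsum_ge0 (T : Type) (s : seq T) f : (forall x, 0 <= f x) -> 0 <= rsum s f.
Proof. move=> H; elim: s => /= [|x s IH]; [lra | have := H x; lra]. Qed.
Lemma rsum_ge0_in (T : eqType) (s : seq T) f : (forall x, x \in s -> 0 <= f x) -> 0 <= rsum s f.
Proof.
elim: s => /= [|x s IH] H; first lra.
have := H x (mem_head _ _); have : 0 <= rsum s f.
  by apply: IH => y Hy; apply: H; rewrite in_cons Hy orbT.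
lra.
Qed.
Lemma rsum_le (T : Type) (s : seq T) f g : (forall x, f x <= g x) -> rsum s f <= rsum s g.
Proof. move=> H; elim: s => /= [|x s IH]; [lra | have := H x; lra]. Qed.
Lemma rsum_le_in (T : eqType) (s : seq T) f g : (forall x, x \in s -> f x <= g x) -> rsum s f <= rsum s g.
Proof.
elim: s => /= [|x s IH] H; first lra.
have := H x (mem_head _ _); have : rsum s f <= rsum s g.
  by apply: IH => y Hy; apply: H; rewrite in_cons Hy orbT.
lra.
Qed.
Lemma rsum_abs (T : Type) (s : seq T) f : Rabs (rsum s f) <= rsum s (fun x => Rabs (f x)).
Proof.
elim: s => /= [|x s IH]; first by rewrite Rabs_R0; lra.
have := Rabs_triang (f x) (rsum s f); lra.
Qed.
Lemma rsum_term (T : eqType) (s : seq T) f x : (forall y, 0 <= f y) -> x \in s -> f x <= rsum s f.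
Proof.
move=> H; elim: s => //= y s IH; rewrite in_cons => /orP [/eqP -> | Hx].
  by have := rsum_ge0 s H; lra.
by have := IH Hx; have := H y; lra.
Qed.
Lemma rsum_swap (T U : Type) (s : seq T) (t : seq U) (F : T -> U -> R) :
  rsum s (fun x => rsum t (fun y => F x y)) = rsum t (fun y => rsum s (fun x => F x y)).
Proof.
rewrite rsumE (eq_bigr (fun x => \big[Rplus/0]_(y <- t) F x y)); last by move=> x _; rewrite rsumE.
rewrite exchange_big rsumE; apply: eq_bigr => y _; by rewrite rsumE.
Qed.
Lemma rsum_flatten (T : Type) (ss : seq (seq T)) f : rsum (flatten ss) f = rsum ss (fun s => rsum s f).
Proof. elim: ss => //= s ss IH; by rewrite rsum_cat IH. Qed.
Lemma rsum_const (T : Type) (s : seq T) c : rsum s (fun _ => c) = INR (size s) * c.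
Proof.
elim: s => [|x s IH]; first by rewrite rsum_nil /=; lra.
rewrite rsum_cons IH; change (size (x :: s)) with (S (size s)); rewrite S_INR; lra.
Qed.
Lemma rsum_eq0_ge0 (T : eqType) (s : seq T) f : (forall x, x \in s -> 0 <= f x) -> rsum s f = 0 ->
  forall x, x \in s -> f x = 0.
Proof.
elim: s => //= y s IH H Hs x; rewrite in_cons.
have Hy := H y (mem_head _ _).
have Hr : 0 <= rsum s f by apply: rsum_ge0_in => z Hz; apply: H; rewrite in_cons Hz orbT.
move=> /orP [/eqP -> | Hx]; first lra.
apply: IH => // [z Hz|]; [by apply: H; rewrite in_cons Hz orbT | lra].
Qed.
Lemma rsum_filter (T : Type) (s : seq T) (P : pred T) f :
  rsum (filter P s) f = rsum s (fun x => if P x then f x else 0).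
Proof. elim: s => //= x s IH; case: (P x) => /=; rewrite IH; lra. Qed.



Lemma tele_alg (a V0 W0 V1 W1 Q Q' G : R) : V0 <> 0 -> V1 <> 0 -> W1 <> 0 ->
  G * V1 = a * (V1 * Q - W1 * Q') ->
  (a / V0 * (a / V1 * Q') * (V0 - W0) + a / W1 * G) * V0 =
  a * (V0 * (a / W1 * Q) - W0 * (a / V1 * Q')).
Proof.
move=> h0 h1 h2 HG.
have -> : G = a * (V1 * Q - W1 * Q') / V1 by rewrite -HG; field.
field; auto.
Qed.

Lemma le_sub0 (x y : R) : x <= y -> 0 <= y - x.
Proof. lra. Qed.


Lemma rprod_cat (T0 : Type) (s1 s2 : seq T0) f : rprod (s1 ++ s2) f = rprod s1 f * rprod s2 f.
Proof. elim: s1 => /= [|x s IH]; [ring | rewrite IH; ring]. Qed.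
Lemma rprod_ext_in (T0 : eqType) (s : seq T0) f g : (forall x, x \in s -> f x = g x) -> rprod s f = rprod s g.
Proof.
elim: s => //= x s IH H; rewrite H ?mem_head // IH // => y Hy; apply: H.
by rewrite in_cons Hy orbT.
Qed.

Lemma incr_last_rcons (A : Type) (y : seq (A * nat)) e k :
  incr_last (rcons y (e, k)) = rcons y (e, k.+1).
Proof. elim: y => [|[c n] y IH] //=; rewrite IH; by case: y IH. Qed.

Lemma map_fst_incr_last (A : Type) (y : seq (A * nat)) : map fst (incr_last y) = map fst y.
Proof.
case/lastP: y => [|y [e k]] //; by rewrite incr_last_rcons !map_rcons.
Qed.

Lemma size_incr_last (A : Type) (y : seq (A * nat)) : size (incr_last y) = size y.
Proof. by rewrite -(size_map fst) map_fst_incr_last size_map. Qed.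


Lemma sum_f_rsum (f : nat -> R) N : sum_f_R0 f N = rsum (iota 0 N.+1) f.
Proof.
elim: N => [|N IH]; first by rewrite /= Rplus_0_r.
change (sum_f_R0 f N.+1) with (sum_f_R0 f N + f N.+1); rewrite IH.
have -> : iota 0 N.+2 = iota 0 N.+1 ++ [:: N.+1] by rewrite -[in LHS](addn1 N.+1) iotaD.
by rewrite rsum_cat /= Rplus_0_r.
Qed.

Lemma sum_f_scale (f : nat -> R) k N : sum_f_R0 (fun n => k * f n) N = k * sum_f_R0 f N.
Proof. elim: N => /= [|N ->]; ring. Qed.
Lemma sum_f_ext (f g : nat -> R) N : (forall n, f n = g n) -> sum_f_R0 f N = sum_f_R0 g N.
Proof. move=> H; elim: N => /= [|N ->]; by rewrite H. Qed.

Lemma terms_to0 (f : nat -> R) l : infinite_sum f l ->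
  forall eps, 0 < eps -> exists N, forall n, (N <= n)%N -> Rabs (f n) < eps.
Proof.
move=> H eps he; have [N HN] := H (eps / 2) ltac:(lra).
exists N.+1 => n hn; case: n hn => [|n] // hn.
have h1 := HN n ltac:(apply/leP; lia); have h2 := HN n.+1 ltac:(apply/leP; lia).
rewrite /R_dist in h1 h2; rewrite /= in h2.
have := Rabs_triang (sum_f_R0 f n + f n.+1 - l) (- (sum_f_R0 f n - l)).
rewrite Rabs_Ropp.
have -> : sum_f_R0 f n + f n.+1 - l + - (sum_f_R0 f n - l) = f n.+1 by ring.
lra.
Qed.

Lemma rsum_pick_gen (A : eqType) (s : seq A) (e : A) (k : R) : uniq s -> e \in s ->
  rsum s (fun b => if e == b then k else 0) = k.
Proof.
elim: s => //= b s IH /andP [hb hu]; rewrite in_cons => /orP [/eqP E | he].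
  subst b; rewrite eqxx (rsum_ext_in (g := fun _ => 0)) ?rsum_const0; first lra.
  by move=> x hx; case: eqP => // E; subst x; rewrite hx in hb.
have -> : (e == b) = false by apply/negbTE; apply: contraNneq hb => <-.
by rewrite IH //; lra.
Qed.

Lemma rsum_partition (A B : eqType) (s : seq A) (h : A -> B) (f : A -> R) :
  rsum s f = rsum (undup (map h s)) (fun b => rsum s (fun t => if h t == b then f t else 0)).
Proof.
rewrite rsum_swap; apply: rsum_ext_in => t ht.
rewrite rsum_pick_gen ?undup_uniq // mem_undup; exact: map_f.
Qed.

Ltac genINR := repeat match goal with |- context [INR ?n] => let x := fresh "r" in set x := INR n end.

Section Model.
Variables (K d : nat) (lam mu : R).
Hypotheses (hd : (0 < d)%N) (hdK : (d <= K)%N) (hlam : 0 < lam) (hmu : 0 < mu).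
Notation T := (ctype K d).

Lemma card_ctype : #|T| = 'C(K, d).
Proof.
rewrite /ctype card_sig; have := card_draws ('I_K) d; rewrite card_ord => <-.
by apply: eq_card => S; rewrite !inE.
Qed.

Lemma size_enumT : size (enum T) = 'C(K, d).
Proof. by rewrite -cardE card_ctype. Qed.

Lemma C_pos : (0 < 'C(K, d))%N.
Proof. by rewrite bin_gt0. Qed.

Lemma INR_C_pos : 0 < INR 'C(K, d).
Proof. apply: lt_0_INR; apply/ltP; exact: C_pos. Qed.

Lemma cval_card (c : T) : #|val c| = d.
Proof. by case: c => S /= /eqP. Qed.

Lemma card_setU_gt0 (A : {set 'I_K}) (c : T) : (0 < #|A :|: val c|)%N.
Proof.
apply: (leq_trans _ (subset_leq_card (subsetUr A (val c)))).
by rewrite cval_card.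
Qed.

Lemma INR_setU_pos (A : {set 'I_K}) (c : T) : 0 < INR #|A :|: val c|.
Proof. apply: lt_0_INR; apply/ltP; exact: card_setU_gt0. Qed.

Lemma card_UD (A B : {set 'I_K}) : #|A :|: B| = (#|A| + #|B :\: A|)%N.
Proof.
have h1 := cardsID A B; have h2 := cardsUI A B.
rewrite setIC in h1; lia.
Qed.

Lemma INR_cardD (A : {set 'I_K}) (c : T) :
  INR #|val c :\: A| = INR #|A :|: val c| - INR #|A|.
Proof. rewrite card_UD plus_INR; lra. Qed.

Lemma servers_nil : servers ([::] : seq T) = set0.
Proof. by rewrite /servers big_nil. Qed.
Lemma servers_cons (c : T) s : servers (c :: s) = val c :|: servers s.
Proof. by rewrite /servers big_cons. Qed.
Lemma servers_cat (s1 s2 : seq T) : servers (s1 ++ s2) = servers s1 :|: servers s2.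
Proof. by rewrite /servers big_cat. Qed.
Lemma servers_rcons (s : seq T) c : servers (rcons s c) = servers s :|: val c.
Proof. by rewrite -cats1 servers_cat servers_cons servers_nil setU0. Qed.

Lemma card_le_K (A : {set 'I_K}) : (#|A| <= K)%N.
Proof. by have := max_card A; rewrite card_ord. Qed.

Lemma dep_total_servers (pre x : seq T) :
  dep_total_aux mu pre x + mu * INR #|servers pre| = mu * INR #|servers (pre ++ x)|.
Proof.
elim: x pre => [|c x IH] pre /=; first by rewrite cats0; lra.
have H := INR_cardD (servers pre) c.
have E : #|servers pre :|: val c| = #|servers (rcons pre c)| by rewrite servers_rcons.
rewrite E in H; rewrite /dep_rate -cat_rcons -IH H Rmult_minus_distr_l.
set u := INR #|servers (rcons pre c)|; set v := INR #|servers pre|; set w := dep_total_aux _ _ _; lra.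
Qed.

Lemma dep_total0 (x : seq T) : dep_total_aux mu [::] x = mu * INR #|servers x|.
Proof. by have := dep_total_servers [::] x; rewrite servers_nil cards0 /=; lra. Qed.

Lemma dep_rate_ge0 pre (c : T) : 0 <= dep_rate mu pre c.
Proof. rewrite /dep_rate; have := pos_INR #|val c :\: servers pre|; nra. Qed.

Definition a := lam / (mu * INR 'C(K, d)).

Lemma a_pos : 0 < a.
Proof. rewrite /a; have := INR_C_pos; move=> h; apply: Rdiv_lt_0_compat => //; nra. Qed.

Fixpoint qf (S : {set 'I_K}) (x : seq T) : R :=
  match x with
  | [::] => 1
  | c :: y => a / INR #|S :|: val c| * qf (S :|: val c) y
  end.

Definition q x := qf set0 x.

Lemma qf_pos S x : 0 < qf S x.
Proof.
elim: x S => /= [|c x IH] S; first lra.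
apply: Rmult_lt_0_compat; last exact: IH.
apply: Rdiv_lt_0_compat; [exact: a_pos | exact: INR_setU_pos].
Qed.

Lemma qf_rcons S x c : qf S (rcons x c) = qf S x * (a / INR #|S :|: servers (rcons x c)|).
Proof.
elim: x S => [|b x IH] S.
  rewrite /= servers_cons servers_nil setU0 Rmult_1_r Rmult_1_l //.
rewrite /= IH servers_cons setUA Rmult_assoc //.
Qed.

Definition Gf (S : {set 'I_K}) (x : seq T) (c : T) : R :=
  rsum (iota 0 (size x).+1) (fun k =>
    qf S (take k x ++ c :: drop k x) * INR #|val c :\: (S :|: servers (take k x))|).

Lemma INR_ne0 n : (0 < n)%N -> INR n <> 0.
Proof. move=> h; apply: not_0_INR; lia. Qed.

Lemma Gf_eq S x c :
  Gf S x c * INR #|S :|: val c| =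
  a * (INR #|S :|: val c| * qf S x - INR #|S| * qf (S :|: val c) x).
Proof.
elim: x S => [|b y IH] S.
  rewrite /Gf /=.
  rewrite servers_nil setU0 INR_cardD.
  have hp : INR #|S :|: val c| <> 0 by apply: INR_ne0; exact: card_setU_gt0.
  genINR; field; exact: hp.
rewrite /Gf.
change (iota 0 (size (b :: y)).+1) with (0%N :: iota 1 (size y).+1).
have -> : iota 1 (size y).+1 = map (addn 1) (iota 0 (size y).+1) by rewrite -iotaDl.
rewrite rsum_cons rsum_map.
rewrite take0 drop0 servers_nil setU0.
have -> : rsum (iota 0 (size y).+1) (fun x => qf S (take (1 + x) (b :: y) ++ c :: drop (1 + x) (b :: y)) *
    INR #|val c :\: (S :|: servers (take (1 + x) (b :: y)))|) = a / INR #|S :|: val b| * Gf (S :|: val b) y c.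
  rewrite /Gf -rsum_scale; apply: rsum_ext => k.
  by rewrite add1n /= servers_cons setUA Rmult_assoc.
have E1 : qf S (c :: b :: y) = a / INR #|S :|: val c| * (a / INR #|S :|: val b :|: val c| * qf (S :|: val b :|: val c) y).
  by rewrite /= setUAC.
have E2 : qf S (b :: y) = a / INR #|S :|: val b| * qf (S :|: val b) y by [].
have E3 : qf (S :|: val c) (b :: y) = a / INR #|S :|: val b :|: val c| * qf (S :|: val b :|: val c) y.
  by rewrite /= setUAC.
rewrite cat0s E1 E2 E3 INR_cardD.
apply: tele_alg; try (apply: INR_ne0; exact: card_setU_gt0).
- exact: IH.
Qed.

Lemma Gf0 x c : Gf set0 x c = a * qf set0 x.
Proof.
have h := Gf_eq set0 x c; rewrite cards0 /= in h.
have hp : INR #|set0 :|: val c| <> 0 by apply: INR_ne0; exact: card_setU_gt0.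
apply: (Rmult_eq_reg_r _ _ _ _ hp); rewrite h; genINR; ring.
Qed.

Lemma q_balance x : q x * out_rate lam mu x = in_rate lam mu (q) x.
Proof.
rewrite /in_rate /out_rate.
have -> : rsum (iota 0 (size x).+1) (fun k => rsum (enum T) (fun c =>
      q (take k x ++ c :: drop k x) * dep_rate mu (take k x) c)) =
    rsum (enum T) (fun c => mu * Gf set0 x c).
  rewrite rsum_swap; apply: rsum_ext => c; rewrite /Gf -rsum_scale; apply: rsum_ext => k.
  rewrite /dep_rate set0U /q; genINR; ring.
under rsum_ext => c do rewrite Gf0.
rewrite rsum_const size_enumT.
have hC := INR_C_pos.
have hmua : mu * (a * qf set0 x) * INR 'C(K, d) = lam * q x.
  have hC0 : INR 'C(K, d) <> 0 by lra.
  rewrite /q /a; genINR; field; split; [exact: hC0 | lra].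
rewrite dep_total0 [INR 'C(K, d) * _]Rmult_comm hmua; clear hmua.
case/lastP: x => [|y c].
  by rewrite /= /q /= servers_nil cards0 /=; lra.
rewrite seq.rev_rcons seq.revK /q qf_rcons set0U /a.
have hs : INR #|servers (rcons y c)| <> 0.
  rewrite servers_rcons; apply: INR_ne0; exact: card_setU_gt0.
have hC0 : INR 'C(K, d) <> 0 by lra.
genINR; field; split; [exact: hC0 | split; [lra | exact: hs]].
Qed.


Fixpoint allseq (n : nat) : seq (seq T) :=
  if n is n'.+1 then [seq rcons t c | t <- allseq n', c <- enum T] else [:: [::]].

Lemma mem_allseq n s : (s \in allseq n) = (size s == n).
Proof.
elim: n s => [|n IH] s /=; first by case: s.
apply/allpairsP/idP => [[[t c] /= [Ht _ ->]] | Hs].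
  by rewrite size_rcons; move: Ht; rewrite IH => /eqP ->.
move: Hs; case/lastP: s => [|t c] //; rewrite size_rcons eqSS => Ht.
by exists (t, c); rewrite /= IH Ht mem_enum.
Qed.

Lemma uniq_allseq n : uniq (allseq n).
Proof.
elim: n => [|n IH] //=; apply: allpairs_uniq => //; first exact: enum_uniq.
by move=> [t1 c1] [t2 c2] _ _ /= /rcons_inj [-> ->].
Qed.

Lemma rsum_allseqS n f : rsum (allseq n.+1) f =
  rsum (allseq n) (fun t => rsum (enum T) (fun c => f (rcons t c))).
Proof.
rewrite /= !rsumE big_allpairs_dep; apply: eq_bigr => t _; by rewrite rsumE.
Qed.

Lemma mass_allseq (p : seq T -> R) n : mass p n = rsum (allseq n) p.
Proof.
rewrite /mass -(rsum_map val _ p); apply: rsum_perm.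
apply: uniq_perm; first by rewrite (map_inj_uniq val_inj) enum_uniq.
  exact: uniq_allseq.
move=> s; rewrite mem_allseq; apply/mapP/idP => [[t _ ->] | Hs].
  by rewrite size_tuple.
by exists (Tuple Hs); rewrite ?mem_enum.
Qed.

Definition ins k (c : T) (y : seq T) := take k y ++ c :: drop k y.

Lemma size_ins k c y : size (ins k c y) = (size y).+1.
Proof. by rewrite /ins size_cat /= size_take size_drop; case: ltnP => h; lia. Qed.

Lemma take_ins k c y : (k <= size y)%N -> take k (ins k c y) = take k y.
Proof. by move=> h; rewrite /ins take_size_cat // size_takel. Qed.

Lemma drop_ins k c y : (k <= size y)%N -> drop k (ins k c y) = c :: drop k y.
Proof. by move=> h; rewrite /ins drop_size_cat // size_takel. Qed.

Lemma ins_perm n k : (k <= n)%N ->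
  perm_eq [seq ins k c y | y <- allseq n, c <- enum T] (allseq n.+1).
Proof.
move=> hk; apply: uniq_perm.
- apply: allpairs_uniq; [exact: uniq_allseq | exact: enum_uniq |].
  move=> [y1 c1] [y2 c2] /allpairsP [[y1' c1'] /= [H1 _ [-> ->]]] /allpairsP [[y2' c2'] /= [H2 _ [-> ->]]] /= E.
  move: H1 H2; rewrite !mem_allseq => /eqP s1 /eqP s2.
  have e1 := take_ins c1' (y := y1'); have e2 := drop_ins c1' (y := y1').
  have f1 := take_ins c2' (y := y2'); have f2 := drop_ins c2' (y := y2').
  have hk1 : (k <= size y1')%N by rewrite s1.
  have hk2 : (k <= size y2')%N by rewrite s2.
  have Et : take k y1' = take k y2' by rewrite -(e1 k hk1) -(f1 k hk2) E.
  have Ed : c1' :: drop k y1' = c2' :: drop k y2' by rewrite -(e2 k hk1) -(f2 k hk2) E.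
  case: Ed => -> Ed.
  by rewrite -(cat_take_drop k y1') -(cat_take_drop k y2') Et Ed.
- exact: uniq_allseq.
move=> z; rewrite mem_allseq; apply/allpairsP/idP => [[[y c] /= [Hy _ ->]] | Hz].
  by rewrite size_ins; move: Hy; rewrite mem_allseq.
move/eqP: Hz => Hz.
have hkz : (k < size z)%N by rewrite Hz.
case E: (drop k z) => [|c rest].
  by move: (f_equal size E); rewrite size_drop /= => h; set sz := size z in Hz hkz h; exfalso; lia.
exists (take k z ++ rest, c); rewrite /= mem_allseq mem_enum; split => //.
  apply/eqP; move: (f_equal size E); rewrite size_cat size_drop (size_takel (ltnW hkz)) /= => h; set sz := size z in Hz hkz h; set sr := size rest in h *; lia.
rewrite /ins take_size_cat ?(size_takel (ltnW hkz)) //.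
rewrite drop_size_cat ?(size_takel (ltnW hkz)) //.
by rewrite -E cat_take_drop.
Qed.

Lemma dep_total_sum (pre z : seq T) : dep_total_aux mu pre z =
  rsum (iota 0 (size z)) (fun k =>
    match drop k z with c :: _ => dep_rate mu (pre ++ take k z) c | [::] => 0 end).
Proof.
elim: z pre => [|c z IH] pre //=.
have -> : iota 1 (size z) = map (addn 1) (iota 0 (size z)) by rewrite -iotaDl.
by rewrite rsum_map cats0 IH; congr (_ + _); apply: rsum_ext => k; rewrite add1n /= cat_rcons.
Qed.

Lemma level_dep (f : seq T -> R) n :
  rsum (allseq n) (fun y => rsum (iota 0 (size y).+1) (fun k => rsum (enum T) (fun c =>
     f (take k y ++ c :: drop k y) * dep_rate mu (take k y) c))) =
  rsum (allseq n.+1) (fun z => f z * dep_total_aux mu [::] z).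
Proof.
pose g k z := match drop k z with c :: _ => f z * dep_rate mu (take k z) c | [::] => 0 end.
transitivity (rsum (iota 0 n.+1) (fun k => rsum (allseq n.+1) (g k))).
  rewrite (rsum_ext_in (g := fun y => rsum (iota 0 n.+1) (fun k => rsum (enum T) (fun c =>
     f (take k y ++ c :: drop k y) * dep_rate mu (take k y) c)))); last first.
    by move=> y; rewrite mem_allseq => /eqP ->.
  rewrite rsum_swap; apply: rsum_ext_in => k; rewrite mem_iota add0n => /andP [_ hk].
  rewrite -(rsum_perm _ (@ins_perm n k hk)) !rsumE big_allpairs_dep; apply: eq_big_seq => y.
  rewrite mem_allseq => /eqP hy; rewrite rsumE; apply: eq_bigr => c _.
  rewrite /g drop_ins ?take_ins ?hy //.
rewrite -rsum_swap; apply: rsum_ext_in => z; rewrite mem_allseq => /eqP hz.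
rewrite dep_total_sum -rsum_scale hz; apply: rsum_ext => k; rewrite /g.
by case: (drop k z) => [|c r]; [ring | rewrite cat0s].
Qed.

Lemma level_arr (f : seq T -> R) n :
  rsum (allseq n) (fun y => match rev y with [::] => 0 | c :: ry => f (rev ry) * (lam / INR 'C(K, d)) end) =
  if n is n'.+1 then lam * rsum (allseq n') f else 0.
Proof.
case: n => [|n]; first by rewrite /= Rplus_0_r.
rewrite rsum_allseqS -rsum_scale; apply: rsum_ext => t.
under rsum_ext => c do rewrite seq.rev_rcons seq.revK.
rewrite rsum_const size_enumT.
have hC := INR_C_pos; have hC0 : INR 'C(K, d) <> 0 by lra.
genINR; field; exact: hC0.
Qed.

Lemma in_rate_lin (f1 f2 : seq T -> R) k y :
  in_rate lam mu (fun x => f1 x + k * f2 x) y = in_rate lam mu f1 y + k * in_rate lam mu f2 y.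
Proof.
rewrite /in_rate.
have -> : forall (A B C D : R), A + B + k * (C + D) = (A + k * C) + (B + k * D) by move=> *; ring.
congr (_ + _); first by case: (rev y) => [|c r]; ring.
rewrite -rsum_scale -rsum_add; apply: rsum_ext => j.
rewrite -rsum_scale -rsum_add; apply: rsum_ext => c; ring.
Qed.

Lemma in_rate_abs (f : seq T -> R) y :
  Rabs (in_rate lam mu f y) <= in_rate lam mu (fun x => Rabs (f x)) y.
Proof.
have hC := INR_C_pos.
have hl : 0 <= lam / INR 'C(K, d) by apply: Rlt_le; apply: Rdiv_lt_0_compat.
rewrite /in_rate; apply: Rle_trans (Rabs_triang _ _) _; apply: Rplus_le_compat.
  case: (rev y) => [|c r]; first by rewrite Rabs_R0; lra.
  by rewrite Rabs_mult (Rabs_pos_eq _ hl); lra.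
apply: Rle_trans (rsum_abs _ _) _; apply: rsum_le => j.
apply: Rle_trans (rsum_abs _ _) _; apply: rsum_le => c.
by rewrite Rabs_mult (Rabs_pos_eq _ (dep_rate_ge0 _ _)); lra.
Qed.


Lemma K_pos : (0 < K)%N.
Proof. exact: leq_trans hd hdK. Qed.

Lemma in_rate_ge0 (g : seq T -> R) y : (forall x, 0 <= g x) -> 0 <= in_rate lam mu g y.
Proof.
move=> hg; have hC := INR_C_pos.
have hl : 0 <= lam / INR 'C(K, d) by apply: Rlt_le; apply: Rdiv_lt_0_compat.
rewrite /in_rate; apply: Rplus_le_le_0_compat.
  case: (rev y) => [|c r]; [lra | have := hg (rev r); nra].
apply: rsum_ge0 => k; apply: rsum_ge0 => c.
have := hg (take k y ++ c :: drop k y); have := dep_rate_ge0 (take k y) c; nra.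
Qed.

Lemma in_rate_ge_head (g : seq T -> R) y c : (forall x, 0 <= g x) ->
  g (c :: y) * (mu * INR d) <= in_rate lam mu g y.
Proof.
move=> hg; have hC := INR_C_pos.
have hl : 0 <= lam / INR 'C(K, d) by apply: Rlt_le; apply: Rdiv_lt_0_compat.
rewrite /in_rate.
have ha : 0 <= match rev y with [::] => 0 | c0 :: ry => g (rev ry) * (lam / INR 'C(K, d)) end.
  case: (rev y) => [|c' r]; [lra | have := hg (rev r); nra].
have hnn : forall k c', 0 <= g (take k y ++ c' :: drop k y) * dep_rate mu (take k y) c'.
  move=> k c'; have := hg (take k y ++ c' :: drop k y); have := dep_rate_ge0 (take k y) c'; nra.
have h1 := @rsum_term _ (iota 0 (size y).+1) (fun k => rsum (enum T) (fun c' =>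
     g (take k y ++ c' :: drop k y) * dep_rate mu (take k y) c')) 0%N.
have h2 := @rsum_term _ (enum T) (fun c' => g (take 0 y ++ c' :: drop 0 y) * dep_rate mu (take 0 y) c') c.
have e : g (take 0 y ++ c :: drop 0 y) * dep_rate mu (take 0 y) c = g (c :: y) * (mu * INR d).
  by rewrite take0 drop0 /dep_rate servers_nil setD0 cval_card.
rewrite e in h2.
have := h2 (hnn 0%N) (mem_enum _ _).
have := h1 (fun k => rsum_ge0 _ (hnn k)) ltac:(by rewrite mem_iota).
move=> H1 H2; apply: (Rle_trans _ _ _ H2); apply: (Rle_trans _ _ _ H1).
rewrite -{1}(Rplus_0_l (rsum (iota 0 (size y).+1) _)); apply: Rplus_le_compat_r; exact: ha.
Qed.

Lemma uniq_core (g : seq T -> R) :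
  (forall y, 0 <= g y) ->
  (forall y, g y * out_rate lam mu y <= in_rate lam mu g y) ->
  (forall eps, 0 < eps -> exists N, forall n, (N <= n)%N -> rsum (allseq n) g < eps) ->
  g [::] = 0 -> forall y, g y = 0.
Proof.
move=> hg hle hlim hg0.
pose M n := rsum (allseq n) g.
pose DD n := rsum (allseq n) (fun z => g z * dep_total_aux mu [::] z).
have hM n : 0 <= M n by apply: rsum_ge0.
have hOut n : rsum (allseq n) (fun y => g y * out_rate lam mu y) = lam * M n + DD n.
  rewrite /out_rate (rsum_ext _ (g := fun y => lam * g y + g y * dep_total_aux mu [::] y)).
    by rewrite rsum_add rsum_scale.
  by move=> y; ring.
have hIn n : rsum (allseq n) (in_rate lam mu g) =
    (if n is n'.+1 then lam * M n' else 0) + DD n.+1.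
  by rewrite /in_rate rsum_add level_arr level_dep.
have DD0 : DD 0%N = 0 by rewrite /DD /=; ring.
have DDle n : DD n <= mu * INR K * M n.
  rewrite /M -rsum_scale; apply: rsum_le => z; rewrite dep_total0.
  have h1 := le_INR _ _ (ssrnat.leP (card_le_K (servers z))).
  have := hg z; move: (INR #|servers z|) h1 => r h1 h2.
  have : g z * (mu * r) <= g z * (mu * INR K) by apply: Rmult_le_compat_l => //; nra.
  lra.
have hlev n : rsum (allseq n) (fun y => g y * out_rate lam mu y) <= rsum (allseq n) (in_rate lam mu g).
  by apply: rsum_le => y; apply: hle.
pose e n := lam * M n - DD n.+1.
have e0 : e 0%N <= 0 by have := hlev 0%N; rewrite hOut hIn DD0 /e; lra.
have edec n : e n.+1 <= e n by have := hlev n.+1; rewrite hOut hIn /e; lra.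
have ele n m : (n <= m)%N -> e m <= e n.
  move=> /subnK <-; elim: (m - n)%N => [|j IH]; first by rewrite add0n; lra.
  by rewrite addSn; have := edec (j + n)%N; lra.
have ezero n : e n = 0.
  have hn : e n <= 0 by have := ele 0%N n (leq0n n); lra.
  case: (Rle_lt_dec 0 (e n)) => h; first lra.
  exfalso.
  have hK : 0 < INR K by apply: lt_0_INR; apply/ssrnat.ltP; exact: K_pos.
  have hmK : 0 < mu * INR K by nra.
  have hpos : 0 < - e n by lra.
  have [N HN] := hlim (- e n / (mu * INR K)) (Rdiv_lt_0_compat _ _ hpos hmK).
  pose m := maxn n N.
  have h1 := HN m.+1 (leq_trans (leq_maxr n N) (leqnSn _)).
  have h2 : lam * M m - DD m.+1 <= e n := ele n m (leq_maxl n N).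
  have h3 := DDle m.+1; have h4 := hM m.
  have h5 : 0 <= lam * M m by apply: Rmult_le_pos; lra.
  have : - e n <= mu * INR K * M m.+1 by lra.
  have : mu * INR K * M m.+1 < mu * INR K * (- e n / (mu * INR K)) by apply: Rmult_lt_compat_l.
  have -> : mu * INR K * (- e n / (mu * INR K)) = - e n by field; lra.
  lra.
have tight y : g y * out_rate lam mu y = in_rate lam mu g y.
  pose n := size y.
  have hy : y \in allseq n by rewrite mem_allseq.
  have hsum : rsum (allseq n) (fun y => in_rate lam mu g y - g y * out_rate lam mu y) = 0.
    rewrite /Rminus rsum_add rsum_opp hIn hOut.
    case: n {hy} => [|n']; first by have := ezero 0%N; rewrite /e DD0; lra.
    by have := ezero n'; have := ezero n'.+1; rewrite /e; lra.
  have := rsum_eq0_ge0 (fun y _ => le_sub0 (hle y)) hsum hy; lra.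
elim => [|c y IH] //.
have h1 := @in_rate_ge_head g y c hg; rewrite -tight IH Rmult_0_l in h1.
have hd' : 0 < INR d by apply: lt_0_INR; apply/ssrnat.ltP.
have := hg (c :: y); have : 0 < mu * INR d by nra.
move=> hp h2; have : g (c :: y) * (mu * INR d) = 0 by nra.
move/Rmult_integral => [] //; lra.
Qed.

Notation tokens x := (map fst x).

Lemma desc_rcons (t : seq T) c : desc (rcons t c) = desc_step (desc t) c.
Proof. by rewrite /desc foldl_rcons. Qed.

Lemma desc_mem (t : seq T) c : (c \in tokens (desc t)) = (c \in t).
Proof.
elim/last_ind: t => [|t c' IH] //; rewrite desc_rcons /desc_step mem_rcons in_cons -IH.
case: ifP => h; first by rewrite map_fst_incr_last; case: eqP => // ->.
by rewrite map_rcons mem_rcons in_cons.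
Qed.

Lemma desc_uniq (t : seq T) : uniq (tokens (desc t)).
Proof.
elim/last_ind: t => [|t c' IH] //; rewrite desc_rcons /desc_step.
case: ifP => h; first by rewrite map_fst_incr_last.
by rewrite map_rcons rcons_uniq h IH.
Qed.

Lemma sub_servers (s : seq T) c : c \in s -> val c \subset servers s.
Proof.
elim: s => //= x s IH; rewrite in_cons servers_cons => /orP [/eqP -> | h].
  exact: subsetUl.
by apply: subset_trans (IH h) _; exact: subsetUr.
Qed.

Lemma desc_servers (t : seq T) : servers t = servers (tokens (desc t)).
Proof.
elim/last_ind: t => [|t c' IH] //; rewrite desc_rcons /desc_step servers_rcons IH.
case: ifP => h; first by rewrite map_fst_incr_last; apply/setUidPl; exact: sub_servers.
by rewrite map_rcons servers_rcons.
Qed.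

Definition Nx (x : seq (T * nat)) := (size x + sumn (map snd x))%N.

Lemma desc_N (t : seq T) : Nx (desc t) = size t.
Proof.
elim/last_ind: t => [|t c' IH] //; rewrite desc_rcons /desc_step size_rcons -IH /Nx.
case: ifP => h.
  have : desc t != [::] by apply/eqP => E; move: h; rewrite E.
  case/lastP: (desc t) => [|y [e k]] // _.
  rewrite incr_last_rcons !map_rcons !sumn_rcons !size_rcons /=; lia.
by rewrite map_rcons sumn_rcons size_rcons /=; lia.
Qed.

Lemma rsum_tuples (f : seq T -> R) n :
  rsum (enum ((n.-tuple T) : finType)) (fun t => f (val t)) = rsum (allseq n) f.
Proof. by have := mass_allseq f n; rewrite /mass. Qed.

Definition W (x : seq (T * nat)) :=
  rsum (allseq (Nx x)) (fun t => if desc t == x then q t else 0).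

Lemma pi_tok_W (p : seq T -> R) x :
  pi_tok p x = rsum (allseq (Nx x)) (fun t => if desc t == x then p t else 0).
Proof. by rewrite /pi_tok -rsum_tuples. Qed.

Lemma step_new (x' : seq (T * nat)) e (y : seq (T * nat)) c : e \notin tokens x' ->
  (desc_step y c == rcons x' (e, 0%N)) = (y == x') && (c == e).
Proof.
move=> he; rewrite /desc_step; case: ifP => h.
  have : y != [::] by apply/eqP => E; move: h; rewrite E.
  case/lastP: y h => [|y [e' k]] // h _.
  rewrite incr_last_rcons eqseq_rcons xpair_eqE andbF /=.
  rewrite andbF; case: eqP => [E|] //=; case: eqP => [E'|] //=.
  by move: he; rewrite -E -E' h.
by rewrite eqseq_rcons xpair_eqE andbT.
Qed.

Lemma step_old (x' : seq (T * nat)) e m (y : seq (T * nat)) c :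
  (desc_step y c == rcons x' (e, m.+1)) = (y == rcons x' (e, m)) && (c \in tokens y).
Proof.
rewrite /desc_step; case: ifP => h.
  have : y != [::] by apply/eqP => E; move: h; rewrite E.
  case/lastP: y h => [|y [e' k]] // h _.
  by rewrite incr_last_rcons !eqseq_rcons !xpair_eqE eqSS andbT.
by rewrite eqseq_rcons xpair_eqE !andbF.
Qed.

Lemma rsum_pick (s : seq T) (e : T) (f : T -> R) : uniq s -> e \in s ->
  rsum s (fun c => if c == e then f c else 0) = f e.
Proof.
move=> hu he; rewrite -(rsum_ext _ (f := fun c => if pred1 e c then f c else 0)) //.
by rewrite -rsum_filter filter_pred1_uniq //= Rplus_0_r.
Qed.

Lemma rsum_count (s : seq T) (k : R) : uniq s ->
  rsum (enum T) (fun c => if c \in s then k else 0) = INR (size s) * k.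
Proof.
move=> hu; rewrite -(rsum_ext _ (f := fun c => if (mem s) c then k else 0)) //.
rewrite -rsum_filter rsum_const; congr (INR _ * _).
apply: perm_size; apply: uniq_perm => //; first by rewrite filter_uniq // enum_uniq.
by move=> c; rewrite mem_filter mem_enum andbT.
Qed.

Lemma W_new (x' : seq (T * nat)) e : e \notin tokens x' ->
  W (rcons x' (e, 0%N)) = W x' * (a / INR #|servers (rcons (tokens x') e)|).
Proof.
move=> he; rewrite /W.
have -> : Nx (rcons x' (e, 0%N)) = (Nx x').+1.
  by rewrite /Nx size_rcons map_rcons sumn_rcons /=; lia.
rewrite rsum_allseqS -rsum_scaler; apply: rsum_ext => t.
under rsum_ext => c do rewrite desc_rcons step_new //.
case: eqP => [Et | _] /=; last by rewrite rsum_const0; ring.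
rewrite rsum_pick ?enum_uniq ?mem_enum // /q qf_rcons set0U servers_rcons desc_servers Et servers_rcons.
by [].
Qed.

Lemma W_old (x' : seq (T * nat)) e m : uniq (tokens (rcons x' (e, m))) ->
  W (rcons x' (e, m.+1)) =
  W (rcons x' (e, m)) * (INR (size x').+1 * a / INR #|servers (rcons (tokens x') e)|).
Proof.
move=> hu; rewrite /W.
have -> : Nx (rcons x' (e, m.+1)) = (Nx (rcons x' (e, m))).+1.
  by rewrite /Nx !size_rcons !map_rcons !sumn_rcons /=; lia.
rewrite rsum_allseqS -rsum_scaler; apply: rsum_ext => t.
under rsum_ext => c do rewrite desc_rcons step_old.
case: eqP => [Et | _]; under rsum_ext => c do rewrite ?andTb ?andFb; last by rewrite rsum_const0; ring.
rewrite (rsum_ext _ (g := fun c => if c \in tokens (rcons x' (e, m)) then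
    q t * (a / INR #|servers (rcons (tokens x') e)|) else 0)); last first.
  move=> c; rewrite Et; case: ifP => // hc.
  rewrite /q qf_rcons set0U servers_rcons desc_servers Et.
  have -> : servers (tokens (rcons x' (e, m))) :|: val c = servers (tokens (rcons x' (e, m))).
    by apply/setUidPl; exact: sub_servers.
  by rewrite map_rcons.
rewrite rsum_count // map_rcons size_rcons size_map /Rdiv; genINR; ring.
Qed.

Lemma tok_weight_rcons (x' : seq (T * nat)) e n :
  tok_weight lam mu (rcons x' (e, n)) = tok_weight lam mu x' *
   (INR (size x').+1 * lam / (mu * INR 'C(K, d) * INR #|servers (rcons (tokens x') e)|)) ^ n.+1
   / INR (size x').+1.
Proof.
rewrite /tok_weight size_rcons.
have -> : iota 1 (size x').+1 = iota 1 (size x') ++ [:: (size x').+1].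
  by rewrite -[in LHS](addn1 (size x')) iotaD add1n.
rewrite rprod_cat.
rewrite (rprod_ext_in (g := fun j => (INR j * lam / (mu * INR 'C(K, d) * INR (Fj x' j))) ^ S (nth O (map snd x') (Nat.pred j)))); last first.
  move=> j; rewrite mem_iota => /andP [h1 h2].
  rewrite /Fj map_rcons -cats1 takel_cat ?size_map; last lia.
  rewrite map_rcons nth_rcons size_map.
  have -> : (Nat.pred j < size x')%N by lia.
  by [].
have -> : forall f, rprod [:: (size x').+1] f = f (size x').+1 by move=> f; rewrite /rprod /= Rmult_1_r.
rewrite [Nat.pred _]/= {2}/Fj map_rcons take_oversize; last by rewrite size_rcons size_map.
rewrite map_rcons nth_rcons size_map ltnn eqxx factS mult_INR.
have h1 : INR (size x')`! <> 0 by apply: INR_ne0; exact: fact_gt0.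
have h2 : INR (size x').+1 <> 0 by apply: INR_ne0.
move: h1 h2; set A := rprod _ _; set B := (_ / _) ^ _; move: (INR (size x')`!) (INR (size x').+1) => u v h1 h2.
field; split => //.
Qed.

Lemma aggregation (x : seq (T * nat)) : uniq (tokens x) -> W x = tok_weight lam mu x.
Proof.
elim/last_ind: x => [|x' [e n] IH] hu.
  rewrite /W /tok_weight /=; have -> : q [::] = 1 by []; rewrite Rinv_1; lra.
have hu' : uniq (tokens x') by move: hu; rewrite map_rcons rcons_uniq => /andP [].
have he : e \notin tokens x' by move: hu; rewrite map_rcons rcons_uniq => /andP [].
rewrite tok_weight_rcons -IH //.
have hF : INR #|servers (rcons (tokens x') e)| <> 0.
  by rewrite servers_rcons; apply: INR_ne0; exact: card_setU_gt0.
have hS : INR (size x').+1 <> 0 by apply: INR_ne0.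
have hmu0 : mu <> 0 by lra.
have hC0 : INR 'C(K, d) <> 0 by have := INR_C_pos; lra.
elim: n hu => [|n IHn] hu.
  rewrite W_new //; move: hF hS hC0; rewrite /a.
  move: (INR #|_|) (INR (size x').+1) (INR 'C(K, d)) => u v w hF hS hC0.
  field; auto.
have hun : uniq (tokens (rcons x' (e, n))) by move: hu; rewrite !map_rcons.
rewrite W_old // IHn //; move: hF hS hC0; rewrite /a.
move: (INR #|_|) (INR (size x').+1) (INR 'C(K, d)) (W x') => u v w z hF hS hC0.
rewrite /=; field; auto.
Qed.

Lemma in_rate_scale (f : seq T -> R) k y :
  in_rate lam mu (fun x => k * f x) y = k * in_rate lam mu f y.
Proof.
rewrite /in_rate Rmult_plus_distr_l; congr (_ + _); first by case: (rev y) => [|c r]; ring.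
rewrite -rsum_scale; apply: rsum_ext => j.
rewrite -rsum_scale; apply: rsum_ext => c; ring.
Qed.

Lemma out_rate_ge0 (y : seq T) : 0 <= out_rate lam mu y.
Proof.
rewrite /out_rate dep_total0; have := pos_INR #|servers y|; nra.
Qed.

Lemma mass_q_tok (n : nat) :
  rsum (allseq n) q = rsum (undup (map (@desc K d) (allseq n))) (tok_weight lam mu).
Proof.
rewrite (rsum_partition _ (@desc K d)); apply: rsum_ext_in => x.
rewrite mem_undup => /mapP [t ht ->].
rewrite -aggregation ?desc_uniq // /W desc_N.
move: ht; rewrite mem_allseq => /eqP ->.
by apply: rsum_ext => t'; rewrite eq_sym.
Qed.

Lemma uniq_flatten_levels (s : seq nat) : uniq s ->
  uniq (flatten [seq undup (map (@desc K d) (allseq n)) | n <- s]).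
Proof.
elim: s => //= n s IH /andP [hn hu]; rewrite cat_uniq undup_uniq IH // andbT.
apply/hasPn => x /flattenP [U /mapP [m hm ->] hx].
apply/negP; rewrite mem_undup => /mapP [t ht E].
move: hx; rewrite mem_undup => /mapP [t' ht' E'].
move: ht ht'; rewrite !mem_allseq => /eqP h1 /eqP h2.
have : n = m by rewrite -h1 -h2 -!desc_N -E -E'.
by move=> enm; move: hn; rewrite enm hm.
Qed.

Lemma partial_bound (Mb : R) : norm_finite K d lam mu ->
  exists Mb, forall N, sum_f_R0 (fun n => rsum (allseq n) q) N <= Mb.
Proof.
move=> [B HB]; exists B => N.
rewrite sum_f_rsum.
rewrite (rsum_ext _ (g := fun n => rsum (undup (map (@desc K d) (allseq n))) (tok_weight lam mu))); last exact: mass_q_tok.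
rewrite -(rsum_map (fun n => undup (map (@desc K d) (allseq n))) _ (fun U => rsum U (tok_weight lam mu))).
rewrite -rsum_flatten; apply: HB; first by apply: uniq_flatten_levels; exact: iota_uniq.
apply/allP => x /flattenP [U /mapP [m _ ->]]; rewrite mem_undup => /mapP [t _ ->].
exact: desc_uniq.
Qed.

Lemma mass_q_ge0 n : 0 <= rsum (allseq n) q.
Proof. apply: rsum_ge0 => x; apply: Rlt_le; exact: qf_pos. Qed.

Lemma main_sec (hfin : norm_finite K d lam mu) :
  (exists p, @stationary K d lam mu p) /\
  (forall p, @stationary K d lam mu p ->
   forall x : seq (ctype K d * nat), uniq (map fst x) ->
   pi_tok p x = (pi_tok p [::] * @tok_weight K d lam mu x)%R).
Proof.
pose Sq := sum_f_R0 (fun n => rsum (allseq n) q).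
have [Mb HMb] := partial_bound 0 hfin.
have hgrow : Un_growing Sq.
  move=> n; have h := mass_q_ge0 n.+1.
  change (Sq n <= Sq n + rsum (allseq n.+1) q); lra.
have hub : has_ub Sq by exists Mb => y [n ->]; exact: HMb.
have [S HS] := growing_cv Sq hgrow hub.
have hS1 : 1 <= S.
  have := growing_ineq Sq S hgrow HS 0%N.
  have -> : Sq 0%N = 1 by rewrite /Sq /=; have -> : q [::] = 1 by []; lra.
  lra.
split.
  exists (fun x => / S * q x); split; last split.
  - move=> x; apply: Rmult_le_pos; [apply: Rlt_le; apply: Rinv_0_lt_compat; lra | apply: Rlt_le; exact: qf_pos].
  - move=> eps he.
    have [N HN] := HS (eps * S) ltac:(nra).
    exists N => n hn.
    have E : sum_f_R0 (mass (fun x => / S * q x)) n = / S * Sq n.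
      rewrite /Sq -sum_f_scale; apply: sum_f_ext => m; by rewrite mass_allseq rsum_scale.
    rewrite /R_dist E.
    have := HN n hn; rewrite /R_dist => h.
    have -> : / S * Sq n - 1 = / S * (Sq n - S) by field; lra.
    rewrite Rabs_mult Rabs_Rinv; last lra.
    rewrite (Rabs_pos_eq S); last lra.
    apply: (Rmult_lt_reg_l S); first lra.
    have -> : S * (/ S * Rabs (Sq n - S)) = Rabs (Sq n - S) by field; lra.
    lra.
  - move=> x; rewrite in_rate_scale -q_balance; ring.
move=> p [hp0 [hsum hbal]] x hx.
pose c0 := p [::].
pose g := fun y => Rabs (p y + - c0 * q y).
have hpq : forall y, p y = c0 * q y.
  have hg0 : forall y, 0 <= g y by move=> y; apply: Rabs_pos.
  have hgle : forall y, g y * out_rate lam mu y <= in_rate lam mu g y.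
    move=> y; apply: Rle_trans (in_rate_abs _ _).
    rewrite in_rate_lin -hbal -q_balance /g.
    have -> : p y * out_rate lam mu y + - c0 * (q y * out_rate lam mu y) =
      (p y + - c0 * q y) * out_rate lam mu y by ring.
    rewrite Rabs_mult (Rabs_pos_eq _ (out_rate_ge0 y)); exact: Rle_refl.
  have hlim : forall eps, 0 < eps -> exists N, forall n, (N <= n)%N -> rsum (allseq n) g < eps.
    move=> eps he.
    have hc : 0 <= Rabs c0 by apply: Rabs_pos.
    have [N1 H1] := @terms_to0 _ _ hsum (eps / 2) ltac:(lra).
    have [N2 H2] := @terms_to0 _ _ HS (eps / (2 * (Rabs c0 + 1))) ltac:(apply: Rdiv_lt_0_compat; lra).
    exists (maxn N1 N2) => n hn.
    have h1 := H1 n (leq_trans (leq_maxl _ _) hn).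
    have h2 := H2 n (leq_trans (leq_maxr _ _) hn).
    rewrite mass_allseq in h1.
    have hle : rsum (allseq n) g <= rsum (allseq n) p + Rabs c0 * rsum (allseq n) q.
      rewrite -rsum_scale -rsum_add; apply: rsum_le => y.
      apply: Rle_trans (Rabs_triang _ _) _; rewrite Rabs_mult Rabs_Ropp.
      rewrite (Rabs_pos_eq (p y)) // (Rabs_pos_eq (q y)); first lra.
      apply: Rlt_le; exact: qf_pos.
    have hq := mass_q_ge0 n.
    have hp := rsum_ge0 (allseq n) hp0.
    rewrite Rabs_pos_eq // in h1; rewrite Rabs_pos_eq // in h2.
    have : Rabs c0 * rsum (allseq n) q <= (Rabs c0 + 1) * rsum (allseq n) q by nra.
    have : (Rabs c0 + 1) * rsum (allseq n) q < eps / 2.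
      have -> : eps / 2 = (Rabs c0 + 1) * (eps / (2 * (Rabs c0 + 1))) by field; lra.
      apply: Rmult_lt_compat_l => //; lra.
    lra.
  have hgnil : g [::] = 0.
    rewrite /g /c0; have -> : q [::] = 1 by [].
    by rewrite Rmult_1_r Rplus_opp_r Rabs_R0.
  move=> y; have := uniq_core hg0 hgle hlim hgnil y; rewrite /g => h.
  case: (Req_dec (p y + - c0 * q y) 0) => h0; first lra.
  by have := Rabs_no_R0 _ h0.
rewrite !pi_tok_W.
have E0 : rsum (allseq (Nx [::])) (fun t => if desc t == [::] then p t else 0) = c0.
  by rewrite /Nx /= /c0 Rplus_0_r.
rewrite E0 (rsum_ext _ (g := fun t => c0 * (if desc t == x then q t else 0))); last first.
  by move=> t; case: ifP => _; [rewrite hpq | ring].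
by rewrite rsum_scale -aggregation.
Qed.
End Model.

Theorem mainTheorem10 (K d : nat) (lam mu : R)
  (hd : (0 < d)%N) (hdK : (d <= K)%N) (hlam : (0 < lam)%R) (hmu : (0 < mu)%R)
  (hfin : @norm_finite K d lam mu) :
  (exists p, @stationary K d lam mu p) /\
  (forall p, @stationary K d lam mu p ->
   forall x : seq (ctype K d * nat), uniq (map fst x) ->
   pi_tok p x = (pi_tok p [::] * @tok_weight K d lam mu x)%R).
Proof. exact: main_sec. Qed.
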